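(* Let $n,d,a,k$ be positive integers and suppose the triple $(n,d,a)$ is good. Then (1) $(n,d,ka)$ is good; (2) $(n,kd,ka)$ is good.
   Context: For positive integers $N,D,A$, let $R=\mathbb{C}[x_1,\dots,x_N]$ with $\mathfrak{S}_N$ permuting variables and $R_A^{\mathfrak{S}_N}$ the symmetric polynomials homogeneous of degree $A$. The triple $(N,D,A)$ is good if there exists $f\in R_A^{\mathfrak{S}_N}$ such that $x_1^D-x_N^D,\dots,x_{N-1}^D-x_N^D,f$ is a regular sequence (equivalently, $f$ has no zero on $\mathcal{V}_D=\{(z_1,\dots,z_N)\in\mathbb{C}^N: z_i^D=1\ \forall i,\ z_N=1\}$); otherwise it is bad. *)

(* Defs.v *)
From mathcomp Require Import all_boot all_order all_algebra.
From mathcomp Require Import reals.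
From mathcomp.real_closed Require Import complex.
From mathcomp.multinomials Require Import mpoly.

Set Implicit Arguments.
Unset Strict Implicit.
Unset Printing Implicit Defensive.

Import GRing.Theory.
Local Open Scope ring_scope.

(* The complex numbers are modelled as [complex R] = R[i] for a real field
   R : realType (every realType is the field of real numbers). *)

Definition in_ideal (P : comNzRingType) (gs : seq P) (g : P) : Prop :=
  exists hs : seq P, size hs = size gs /\
    g = \sum_(i < size gs) hs`_i * gs`_i.

Definition regular_seq (P : comNzRingType) (gs : seq P) : Prop :=
  (forall j : nat, (j < size gs)%N -> forall g : P,
      in_ideal (take j gs) (gs`_j * g) -> in_ideal (take j gs) g)
  /\ ~ in_ideal gs 1.

(* The sequence x_1^D - x_N^D, ..., x_{N-1}^D - x_N^D, f in C[x_1..x_N];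
   the variables are indexed by 'I_(N.-1.+1) (= 'I_N for N > 0), x_N being
   the variable of index ord_max. *)
Definition good_seq (R : realType) (N D : nat) (f : {mpoly R[i][N.-1.+1]})
  : seq {mpoly R[i][N.-1.+1]} :=
  rcons [seq 'X_(widen_ord (leqnSn N.-1) j) ^+ D - 'X_ord_max ^+ D
        | j <- enum 'I_N.-1] f.

Definition good (R : realType) (N D A : nat) : Prop :=
  exists f : {mpoly R[i][N.-1.+1]},
    [/\ f \is symmetric, f \is A.-homog & regular_seq (good_seq D f)].

(* Main.v *)
Require Import Defs.
From HB Require Import structures.
From mathcomp Require Import all_boot all_order all_algebra.
From mathcomp Require Import reals.
From mathcomp.real_closed Require Import complex.
From mathcomp.multinomials Require Import ssrcomplements mpoly.
From mathcomp Require Import bigenough all_fingroup.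
Import BigEnough.

Set Implicit Arguments.
Unset Strict Implicit.
Unset Printing Implicit Defensive.
Import GRing.Theory.
Local Open Scope ring_scope.

Section Ideal.
Variable P : comNzRingType.
Implicit Types (gs : seq P) (g : P).

Lemma in_idealP gs g : in_ideal gs g <->
  exists h : nat -> P, g = \sum_(i < size gs) h i * gs`_i.
Proof.
split=> [[hs [_ ->]]|[h ->]]; first by exists (nth 0 hs).
exists (mkseq h (size gs)); rewrite size_mkseq; split=> //.
by apply: eq_bigr => i _; rewrite nth_mkseq.
Qed.

Lemma in_ideal0 gs : in_ideal gs 0.
Proof.
by apply/in_idealP; exists (fun _ => 0); rewrite big1 // => i _; rewrite mul0r.
Qed.

Lemma in_idealD gs g1 g2 :
  in_ideal gs g1 -> in_ideal gs g2 -> in_ideal gs (g1 + g2).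
Proof.
move=> /in_idealP[h1 ->] /in_idealP[h2 ->]; apply/in_idealP.
exists (fun i => h1 i + h2 i); rewrite -big_split; apply: eq_bigr => i _.
by rewrite mulrDl.
Qed.

Lemma in_idealM gs r g : in_ideal gs g -> in_ideal gs (r * g).
Proof.
move=> /in_idealP[h ->]; apply/in_idealP; exists (fun i => r * h i).
by rewrite mulr_sumr; apply: eq_bigr => i _; rewrite mulrA.
Qed.

Lemma in_ideal_sum gs (I : finType) (F : I -> P) :
  (forall i, in_ideal gs (F i)) -> in_ideal gs (\sum_i F i).
Proof.
move=> H; apply: (big_ind (in_ideal gs)) => //; [exact: in_ideal0 | exact: in_idealD].
Qed.

Lemma in_ideal_rcons gs f g :
  in_ideal (rcons gs f) g <-> exists r, in_ideal gs (g - r * f).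
Proof.
split.
- move=> /in_idealP[h ->]; exists (h (size gs)); apply/in_idealP; exists h.
  rewrite size_rcons big_ord_recr /= nth_rcons ltnn eqxx addrK.
  by apply: eq_bigr => i _; rewrite nth_rcons ltn_ord.
- move=> [r /in_idealP[h E]]; apply/in_idealP.
  exists (fun i => if i == size gs then r else h i).
  rewrite size_rcons big_ord_recr /= nth_rcons ltnn !eqxx.
  rewrite -(subrK (r * f) g) E; congr (_ + _); apply: eq_bigr => i _.
  by rewrite nth_rcons ltn_ord (ltn_eqF (ltn_ord i)).
Qed.

Lemma take_rcons_le gs f j : (j <= size gs)%N -> take j (rcons gs f) = take j gs.
Proof.
move=> lej; rewrite -cats1 take_cat; case: ltnP => // hj.
have -> : j = size gs by apply/eqP; rewrite eqn_leq lej hj.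
by rewrite subnn take0 cats0 take_size.
Qed.

Lemma regular_rcons_pow gs f k : (0 < k)%N ->
  regular_seq (rcons gs f) -> regular_seq (rcons gs (f ^+ k)).
Proof.
move=> k0 [reg nunit].
have Hf : forall g, in_ideal gs (f * g) -> in_ideal gs g.
  move=> g H; have := reg (size gs).
  rewrite size_rcons ltnSn take_rcons_le // take_size nth_rcons ltnn eqxx.
  by move=> X; exact: (X isT g H).
split.
- move=> j; rewrite size_rcons ltnS leq_eqVlt => /orP[/eqP ->|ltj] g.
  + rewrite take_rcons_le // take_size nth_rcons ltnn eqxx.
    elim: k {k0} g => [|k IH] g; first by rewrite expr0 mul1r.
    by rewrite exprS -mulrA => /Hf /IH.
  + have lej := ltnW ltj.
    rewrite take_rcons_le // nth_rcons ltj => H.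
    have := reg j; rewrite size_rcons ltnS lej take_rcons_le //.
    rewrite nth_rcons ltj => X; exact: (X isT g H).
- move=> /in_ideal_rcons [r H]; apply: nunit; apply/in_ideal_rcons.
  case: k k0 H => [|k] // _ H.
  by exists (r * f ^+ k); rewrite -mulrA -exprSr.
Qed.
End Ideal.

Section Flat.
Variables (P : comNzRingType) (phi : {rmorphism P -> P}) (I : finType)
  (pi : I -> {additive P -> P}) (b : I -> P) (e0 : I).
Hypothesis piM : forall e u p, pi e (phi u * p) = u * pi e p.
Hypothesis recon : forall p, p = \sum_e b e * phi (pi e p).
Hypothesis pi1 : pi e0 1 = 1.

Lemma in_ideal_map gs g : in_ideal gs g -> in_ideal (map phi gs) (phi g).
Proof.
move=> /in_idealP[h ->]; apply/in_idealP; exists (fun i => phi (h i)).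
rewrite size_map rmorph_sum; apply: eq_bigr => i _.
by rewrite rmorphM (nth_map 0).
Qed.

Lemma in_ideal_pi gs p e : in_ideal (map phi gs) p -> in_ideal gs (pi e p).
Proof.
move=> /in_idealP[h ->]; apply/in_idealP; exists (fun i => pi e (h i)).
rewrite raddf_sum size_map; apply: eq_bigr => i _.
by rewrite (nth_map 0) // mulrC piM mulrC.
Qed.

Lemma in_ideal_recon gs p :
  (forall e, in_ideal gs (pi e p)) -> in_ideal (map phi gs) p.
Proof.
move=> H; rewrite (recon p); apply: in_ideal_sum => e; apply: in_idealM.
exact: in_ideal_map.
Qed.

Lemma regular_map gs : regular_seq gs -> regular_seq (map phi gs).
Proof.
move=> [reg nunit]; split.
- move=> j; rewrite size_map => ltj g; rewrite -map_take (nth_map 0) // => H.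
  apply: in_ideal_recon => e; apply: (reg j ltj).
  by rewrite -piM; apply: in_ideal_pi.
- by move=> /(in_ideal_pi e0); rewrite pi1.
Qed.
End Flat.

Section Concrete.
Variables (C : comNzRingType) (n k : nat).
Hypothesis k0 : (0 < k)%N.
Local Notation P := {mpoly C[n]}.

Definition tk : n.-tuple P := [tuple 'X_i ^+ k | i < n].
Definition mdivk (m : 'X_{1..n}) : 'X_{1..n} := [multinom (m i %/ k)%N | i < n].
Definition Fm (e : {ffun 'I_n -> 'I_k}) (m : 'X_{1..n}) : P :=
  if [forall i, (m i %% k)%N == e i] then 'X_[mdivk m] else 0.
Definition pik e (p : P) : P := \sum_(m <- msupp p) p@_m *: Fm e m.

Lemma pikE e p w : (msize p <= w)%N ->
  pik e p = \sum_(m : 'X_{1..n < w}) p@_m *: Fm e m.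
Proof.
move=> le_pi; set I : subFinType _ := 'X_{1..n < w}.
rewrite /pik (big_mksub I) ?msupp_uniq //=; first last.
  by move=> x /msize_mdeg_lt /leq_trans; apply.
rewrite big_rmcond //= => j /memN_msupp_eq0 ->.
by rewrite scale0r.
Qed.

Lemma pik_is_additive e : additive (pik e).
Proof.
move=> p q /=; set i := maxn (msize p) (msize q).
have hp : (msize p <= i)%N by rewrite leq_maxl.
have hq : (msize q <= i)%N by rewrite leq_maxr.
have hpq : (msize (p - q) <= i)%N.
  by apply: leq_trans (mmeasureD_le _ _ _) _; rewrite mmeasureN.
rewrite !(pikE e (w := i)) // -sumrB; apply/eq_bigr => m _.
by rewrite !raddfB /= scalerBl.
Qed.

HB.instance Definition _ e := GRing.isAdditive.Build P P (pik e)
  (pik_is_additive e).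

Lemma pikZ e c p : pik e (c *: p) = c *: pik e p.
Proof.
rewrite !(pikE e (w := msize p)) ?msizeZ_le // scaler_sumr.
by apply/eq_bigr => m _; rewrite mcoeffZ scalerA.
Qed.

Lemma pikX e m : pik e 'X_[m] = Fm e m.
Proof. by rewrite /pik msuppX big_seq1 mcoeffX eqxx scale1r. Qed.

Lemma phiX m : comp_mpoly tk 'X_[m] = 'X_[m *+ k].
Proof.
rewrite comp_mpolyX [RHS]mpolyXE_id; apply: eq_bigr => i _.
by rewrite tnth_mktuple -exprM mulmnE mulnC.
Qed.

Lemma Fm_shift e m0 m : Fm e (m0 *+ k + m)%MM = 'X_[m0] * Fm e m.
Proof.
rewrite /Fm.
have -> : [forall i, (((m0 *+ k + m)%MM i) %% k)%N == e i] =
          [forall i, (m i %% k)%N == e i].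
  by apply: eq_forallb => i; rewrite mnmDE mulmnE modnMDl.
case: ifP => _; last by rewrite mulr0.
rewrite -mpolyXD; congr 'X_[_]; apply/mnmP => i.
by rewrite mnmDE mnmE mnmDE mulmnE divnMDl // mnmE.
Qed.

Lemma piM1 e m0 p : pik e ('X_[m0 *+ k] * p) = 'X_[m0] * pik e p.
Proof.
elim/mpolyind: p => [|c m p _ _ IH]; first by rewrite mulr0 raddf0 mulr0.
rewrite mulrDr !raddfD /= IH mulrDr; congr (_ + _).
by rewrite -scalerAr -mpolyXD !pikZ !pikX Fm_shift scalerAr.
Qed.

Lemma piM e u p : pik e (comp_mpoly tk u * p) = u * pik e p.
Proof.
elim/mpolyind: u => [|c m u _ _ IH]; first by rewrite rmorph0 !mul0r raddf0.
rewrite rmorphD /= !mulrDl raddfD /= IH; congr (_ + _).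
by rewrite comp_mpolyZ phiX -scalerAl pikZ piM1 scalerAl.
Qed.

Definition me (e : {ffun 'I_n -> 'I_k}) : 'X_{1..n} := [multinom (e i : nat) | i < n].

Lemma reconX m :
  'X_[m] = \sum_e 'X_[me e] * comp_mpoly tk (Fm e m).
Proof.
pose em : {ffun 'I_n -> 'I_k} := [ffun i => Ordinal (ltn_pmod (m i) k0)].
have hm : [forall i, (m i %% k)%N == em i] by apply/forallP => i; rewrite ffunE.
rewrite (bigD1 em) //= big1 ?addr0; last first.
  move=> e ne; rewrite /Fm; case: ifP => [/forallP h|_]; last by rewrite rmorph0 mulr0.
  case/eqP: ne; apply/ffunP => i; apply/val_inj; rewrite ffunE /=.
  by apply/esym/eqP; apply: h.
rewrite /Fm hm phiX -mpolyXD; congr 'X_[_]; apply/mnmP => i.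
by rewrite mnmDE !mnmE mulmnE mnmE ffunE /= addnC -divn_eq.
Qed.

Lemma recon p : p = \sum_e 'X_[me e] * comp_mpoly tk (pik e p).
Proof.
elim/mpolyind: p => [|c m p _ _ IH].
  by rewrite big1 // => e _; rewrite raddf0 rmorph0 mulr0.
under eq_bigr => e _ do rewrite raddfD rmorphD mulrDr /=.
rewrite big_split /= -IH; congr (_ + _).
rewrite {1}(reconX m) scaler_sumr; apply: eq_bigr => e _.
by rewrite pikZ pikX comp_mpolyZ scalerAr.
Qed.

Lemma pi1 : pik [ffun => Ordinal k0] 1 = 1.
Proof.
rewrite -mpolyX0 pikX /Fm.
have -> : [forall i, ((0%MM : 'X_{1..n}) i %% k)%N == ([ffun => Ordinal k0] : {ffun 'I_n -> 'I_k}) i].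
  by apply/forallP => i; rewrite ffunE mnmE mod0n.
by congr 'X_[_]; apply/mnmP => i; rewrite !mnmE div0n.
Qed.


Lemma phi_sym f : f \is symmetric -> comp_mpoly tk f \is symmetric.
Proof.
move=> fs; apply: msym_comp_poly => // s; apply/tuple_permP; exists (s^-1)%g.
rewrite /tk; apply: (congr1 val); apply: eq_from_tnth => i; rewrite !tnth_mktuple -tnth_nth tnth_mktuple.
rewrite rmorphXn /= msymX; congr (_ ^+ _); congr 'X_[_].
apply/mnmP => j; rewrite !mnmE.

by rewrite (inj_eq (@perm_inj _ _)).
Qed.

Lemma phi_homog f A : f \is A.-homog -> comp_mpoly tk f \is (k * A).-homog.
Proof.
move=> /dhomogP hf.
have -> : comp_mpoly tk f = \sum_(m <- msupp f) f@_m *: 'X_[m *+ k].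
  rewrite {1}(mpolyE f) raddf_sum; apply: eq_bigr => m _.
  by rewrite /= comp_mpolyZ phiX.
rewrite big_seq; apply: rpred_sum => m hm; apply: rpredZ.
rewrite dhomogX; have h := hf m hm; rewrite /= in h *; by rewrite mdegMn h mulnC.
Qed.

End Concrete.

Lemma good_seq_map (R : realType) (N D k : nat) f :
  map (comp_mpoly (tk _ _ k)) (good_seq D f) = good_seq (k * D) (comp_mpoly (tk _ _ k) f :> {mpoly R[i][N.-1.+1]}).
Proof.
rewrite /good_seq map_rcons -map_comp; congr rcons; apply: eq_map => j /=.
rewrite rmorphB !rmorphXn /= !comp_mpolyXU -!tnth_nth !tnth_mktuple.
by rewrite -!exprM.
Qed.

Lemma main_aux (R : realType) (n d a k : nat) :
  (0 < n)%N -> (0 < d)%N -> (0 < a)%N -> (0 < k)%N ->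
  good R n d a ->
  good R n d (k * a)%N /\ good R n (k * d)%N (k * a)%N.
Proof.
move=> n0 d0 a0 k0 [f [fsym fhom freg]]; split.
- exists (f ^+ k); split.
  + exact: rpredX.
  + by rewrite mulnC; apply: dhomogMn.
  + by rewrite /good_seq; apply: regular_rcons_pow => //.
- exists (comp_mpoly (tk _ _ k) f); split.
  + exact: phi_sym.
  + exact: phi_homog.
  + rewrite -good_seq_map.
    pose phi : {rmorphism {mpoly R[i][n.-1.+1]} -> {mpoly R[i][n.-1.+1]}} := comp_mpoly (tk _ _ k).
    pose pi := fun e : {ffun 'I_n.-1.+1 -> 'I_k} => (pik e : {additive {mpoly R[i][n.-1.+1]} -> {mpoly R[i][n.-1.+1]}}).
    have := @regular_map _ phi _ pi _ _ (@piM _ _ k k0) (@recon _ _ _ k0) (@pi1 _ _ _ k0).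
    by apply.
Qed.

Local Close Scope ring_scope.

Theorem proposition3p25 (R : realType) (n d a k : nat) :
  (0 < n)%N -> (0 < d)%N -> (0 < a)%N -> (0 < k)%N ->
  good R n d a ->
  good R n d (k * a) /\ good R n (k * d) (k * a).
Proof. exact: main_aux. Qed.
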